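(* Every finitely generated free semigroup is weakly homogeneous.
   Context: A semigroup $S$ is weakly homogeneous if for every isomorphism $\varphi:A\to B$ between finitely generated subsemigroups $A,B$ of $S$ such that both $\varphi$ and $\varphi^{-1}:B\to A$ extend to endomorphisms of $S$, the map $\varphi$ extends to an automorphism of $S$. *)

(* Defs.v *)
From Stdlib Require List.
From mathcomp Require Import all_boot.
Set Implicit Arguments. Unset Strict Implicit. Unset Printing Implicit Defensive.

Record semigroup := Semigroup {
  sg_carrier :> Type;
  sg_op : sg_carrier -> sg_carrier -> sg_carrier;
  sg_assoc : forall x y z, sg_op x (sg_op y z) = sg_op (sg_op x y) z }.

Section Generic.
Variable S : semigroup.
Local Notation "x * y" := (sg_op x y).

Inductive generated (gens : list S) : S -> Prop :=
| gen_in : forall x, List.In x gens -> generated gens x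
| gen_op : forall x y, generated gens x -> generated gens y -> generated gens (x * y).

Definition subsemigroup (A : S -> Prop) : Prop :=
  forall x y, A x -> A y -> A (x * y).

Definition fin_gen_subsemigroup (A : S -> Prop) : Prop :=
  exists gens : list S, forall x, A x <-> generated gens x.

Definition endomorphism (g : S -> S) : Prop :=
  forall x y, g (x * y) = g x * g y.

Definition automorphism (g : S -> S) : Prop :=
  endomorphism g /\ bijective g.

Definition iso_between (A B : S -> Prop) (phi : S -> S) : Prop :=
  [/\ forall x, A x -> B (phi x),
      forall x y, A x -> A y -> phi (x * y) = phi x * phi y,
      forall x y, A x -> A y -> phi x = phi y -> x = y
    & forall y, B y -> exists2 x, A x & phi x = y].

Definition weakly_homogeneous : Prop :=
  forall (A B : S -> Prop) (phi : S -> S),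
    fin_gen_subsemigroup A -> fin_gen_subsemigroup B ->
    iso_between A B phi ->
    (exists2 g, endomorphism g & forall x, A x -> g x = phi x) ->
    (* phi^{-1} : B -> A extends to an endomorphism of S *)
    (exists2 h, endomorphism h & forall x, A x -> h (phi x) = x) ->
    exists2 alpha, automorphism alpha & forall x, A x -> alpha x = phi x.
End Generic.

(* Free semigroup on an alphabet X: nonempty words over X, a word being
   represented as (first letter, remaining letters), with concatenation. *)
Definition fword (X : Type) := (X * seq X)%type.
Definition fword_op (X : Type) (u v : fword X) : fword X :=
  (u.1, u.2 ++ v.1 :: v.2).
Lemma fword_assoc (X : Type) (u v w : fword X) :
  fword_op u (fword_op v w) = fword_op (fword_op u v) w.
Proof. by case: u => a s; case: v => b t; case: w => c r; rewrite /fword_op /= -catA. Qed.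

Definition free_semigroup (X : Type) : semigroup :=
  @Semigroup (fword X) (@fword_op X) (@fword_assoc X).

(* Main.v *)
Require Import Defs.
From mathcomp Require Import all_boot.
From Stdlib Require Import ClassicalEpsilon.
From mathcomp Require Import zify.
Set Implicit Arguments. Unset Strict Implicit.

Section Free.
Variable X : finType.
Local Notation S := (free_semigroup X).

Definition len (w : fword X) := (size w.2).+1.

Lemma len_op (u v : fword X) : len (fword_op u v) = len u + len v.
Proof. by case: u => a s; case: v => b t; rewrite /len /= size_cat /=; lia. Qed.

Lemma endo_split (g : S -> S) : endomorphism g -> forall a b t,
  g (a, b :: t) = fword_op (g (a, [::])) (g (b, t)).
Proof. by move=> Hg a b t; apply: (Hg (a, [::]) (b, t)). Qed.

Lemma len_ge (g : S -> S) : endomorphism g -> forall s a, (size s).+1 <= len (g (a, s)).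
Proof.
move=> Hg; elim=> [|b t IH] a; first by rewrite /len.
rewrite endo_split // len_op /=.
have := IH b; rewrite /len; lia.
Qed.

Lemma fix_letters (k : S -> S) : endomorphism k -> forall s a,
  k (a, s) = (a, s) -> forall c, c \in a :: s -> k (c, [::]) = (c, [::]).
Proof.
move=> Hk; elim=> [|b t IH] a.
  by move=> H c; rewrite inE => /eqP ->.
rewrite endo_split //.
have Hl := len_ge Hk t b.
case E1: (k (a, [::])) => [a' s']; case E2: (k (b, t)) => [b' t'].
rewrite E2 /len /= in Hl.
rewrite /fword_op /= => [[Ea Es]].
have Hs : size s' = 0.
  have := congr1 size Es; rewrite size_cat /=; lia.
move/size0nil: Hs Es E1 => -> /= [Eb Et] E1.
subst.
move=> c; rewrite inE => /orP [/eqP -> //|]; exact: IH.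
Qed.

Lemma endo_comp (g h : S -> S) : endomorphism g -> endomorphism h ->
  endomorphism (fun w => h (g w)).
Proof. by move=> Hg Hh x y; rewrite Hg Hh. Qed.

Definition wmap (f : X -> X) (w : fword X) : fword X := (f w.1, map f w.2).

Lemma wmap_endo f : @endomorphism S (wmap f).
Proof. by move=> [a s] [b t]; rewrite /wmap /= /fword_op /= map_cat. Qed.

Lemma wmap_bij f : bijective f -> bijective (wmap f).
Proof.
move=> [f' K1 K2]; exists (wmap f') => [[a s]|[a s]]; rewrite /wmap /= -map_comp.
  by rewrite K1 (eq_map K1) map_id.
by rewrite K2 (eq_map K2) map_id.
Qed.

Lemma extend_inj (C : {set X}) (f : X -> X) : {in C &, injective f} ->
  exists2 sg : X -> X, bijective sg & {in C, sg =1 f}.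
Proof.
move=> finj.
set D := ~: C; set E := ~: (f @: C).
have cDE : size (enum D) = size (enum E).
  rewrite -!cardE.
  have h1 := cardsC C; have h2 := cardsC (f @: C).
  rewrite card_in_imset // in h2; rewrite /D /E; lia.
pose sg x := if x \in C then f x else nth x (enum E) (index x (enum D)).
have sgE x : x \notin C -> sg x \in E /\ index x (enum D) < size (enum E).
  move=> xC; rewrite /sg (negbTE xC).
  have xi : index x (enum D) < size (enum E).
    by rewrite -cDE index_mem mem_enum /D inE.
  by split => //; rewrite -mem_enum mem_nth.
exists sg; last by move=> x xC; rewrite /sg xC.
apply: injF_bij => x y.
case xC: (x \in C); case yC: (y \in C).
- by rewrite /sg xC yC; apply: finj.
- move: (sgE y (negbT yC)) => [+ _]; rewrite /E inE => /negP H E'.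
  by exfalso; apply: H; rewrite -E' /sg xC imset_f.
- move: (sgE x (negbT xC)) => [+ _]; rewrite /E inE => /negP H E'.
  by exfalso; apply: H; rewrite E' /sg yC imset_f.
- move: (sgE x (negbT xC)) (sgE y (negbT yC)) => [_ ix] [_ iy].
  rewrite /sg xC yC (set_nth_default x y iy) => Heq.
  have := index_uniq x ix (enum_uniq (mem E)).
  rewrite Heq (index_uniq x iy (enum_uniq (mem E))) => Hi.
  have xD : x \in enum D by rewrite mem_enum /D inE xC.
  have yD : y \in enum D by rewrite mem_enum /D inE yC.
  by rewrite -(nth_index x xD) -Hi (set_nth_default y x) ?nth_index // Hi index_mem.
Qed.

End Free.

Theorem mainTheorem4 (X : finType) :
  weakly_homogeneous (free_semigroup X).
Proof.
move=> A B phi _ _ _ [g Hg gA] [h Hh hA].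
pose Cp c := exists w : fword X, A w /\ c \in w.1 :: w.2.
pose C := [set c | if excluded_middle_informative (Cp c) then true else false].
have inC c : c \in C -> Cp c.
  by rewrite inE; case: excluded_middle_informative.
have Cin w c : A w -> c \in w.1 :: w.2 -> c \in C.
  move=> Aw cw; rewrite inE; case: excluded_middle_informative => // H; exfalso; apply: H; by exists w.
have Hk := endo_comp Hg Hh.
have kfix c : c \in C -> h (g (c, [::])) = (c, [::]).
  move=> /inC [[a s] [Aw cw]].
  apply: (fix_letters Hk (s := s) (a := a)) => //=.
  by rewrite gA // hA.
have gsingle c : c \in C -> g (c, [::]) = ((g (c, [::])).1, [::]).
  move=> cC; have := kfix c cC.
  case E: (g (c, [::])) => [c' s'] Hkc.
  have := len_ge Hh s' c'; rewrite Hkc /len /=.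
  by case: s' {E Hkc} => //= ? ? ; rewrite ltnS.
pose gl c := (g (c, [::])).1.
have glinj : {in C &, injective gl}.
  move=> x y xC yC Exy.
  have := kfix x xC; rewrite (gsingle x xC) -/(gl x) Exy.
  rewrite /gl -(gsingle y yC) kfix // => [[]] //.
have [sg sgb sgE] := extend_inj glinj.
exists (wmap sg); first by split; [apply: wmap_endo | apply: wmap_bij].
move=> [a s] Aw; rewrite -gA //.
have : forall c, c \in a :: s -> c \in C by move=> c; apply: Cin Aw.
elim: s a {Aw} => [|b t IH] a HC.
  by rewrite (gsingle a) ?HC ?mem_head // /wmap /= sgE ?HC ?mem_head.
rewrite (endo_split Hg) (gsingle a) ?HC ?mem_head // -IH.
  by rewrite /wmap /fword_op /= sgE ?HC ?mem_head.
by move=> c cin; apply: HC; rewrite inE cin orbT.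
Qed.
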